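(* Let $\mathcal{P}'$ be a $(K',F',Z',S')$-PDA and write $g'=F'-Z'$. Let $m$ be a positive integer divisible by $6$. Then there exists a $(K,F,Z,S)$-PDA with $K=mK'$, $F=mF'$, $Z=mF'-3g'$ and $S=8S'$.
   Context: A $(K,F,Z,S)$-PDA (placement delivery array) is an $F\times K$ array whose entries are either the symbol $*$ or integers from $\{1,\dots,S\}$, each integer of $\{1,\dots,S\}$ appearing at least once, such that: (A) each column contains exactly $Z$ entries equal to $*$; (B) no integer appears more than once in any row or any column; (C) whenever $p_{j_1,k_1}=p_{j_2,k_2}=s$ is an integer with $j_1\ne j_2$ and $k_1\ne k_2$, then $p_{j_1,k_2}=p_{j_2,k_1}=*$. *)

(* Defs.v *)
From mathcomp Require Import all_boot.
Set Implicit Arguments. Unset Strict Implicit. Unset Printing Implicit Defensive.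

(* A PDA array with F rows and K columns: entry p j k is [None] for the
   symbol * and [Some s] for the integer s. *)
Definition pda_array (F K : nat) := 'I_F -> 'I_K -> option nat.

Arguments pda_array : clear implicits.
Definition is_PDA (K F Z S : nat) (p : pda_array F K) : Prop :=
  (forall j k s, p j k = Some s -> 1 <= s <= S) /\
  (forall s, 1 <= s <= S -> exists j k, p j k = Some s) /\
  (forall k : 'I_K, #|[set j : 'I_F | p j k == None]| = Z) /\
  (forall (j : 'I_F) (k1 k2 : 'I_K) s,
      p j k1 = Some s -> p j k2 = Some s -> k1 = k2) /\
  (forall (j1 j2 : 'I_F) (k : 'I_K) s,
      p j1 k = Some s -> p j2 k = Some s -> j1 = j2) /\
  (forall (j1 j2 : 'I_F) (k1 k2 : 'I_K) s,
      p j1 k1 = Some s -> p j2 k2 = Some s -> j1 != j2 -> k1 != k2 ->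
      p j1 k2 = None /\ p j2 k1 = None).
Arguments is_PDA : clear implicits.

(* Main.v *)
Require Import Defs.
From mathcomp Require Import all_boot zify.
Set Implicit Arguments. Unset Strict Implicit. Unset Printing Implicit Defensive.

Lemma divF (N F1 F2 : nat) (eN : N = F1*F2) (i : 'I_N) : i %/ F2 < F1.
Proof. case: i => /= i Hi.
have hF : 0 < F2 by move: Hi; rewrite eN; case: (F2) => //; rewrite muln0.
by rewrite ltn_divLR // -eN. Qed.
Lemma modF (N F1 F2 : nat) (eN : N = F1*F2) (i : 'I_N) : i %% F2 < F2.
Proof. case: i => /= i Hi.
have hF : 0 < F2 by move: Hi; rewrite eN; case: (F2) => //; rewrite muln0.
by rewrite ltn_pmod. Qed.
Definition dv N F1 F2 (eN : N = F1*F2) (i : 'I_N) : 'I_F1 := Ordinal (divF eN i).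
Definition md N F1 F2 (eN : N = F1*F2) (i : 'I_N) : 'I_F2 := Ordinal (modF eN i).
Lemma encF N F1 F2 (eN : N = F1*F2) (j : 'I_F1) (a : 'I_F2) : j * F2 + a < N.
Proof. rewrite eN; case: j a => j Hj [a Ha] /=; nia. Qed.
Definition en N F1 F2 (eN : N = F1*F2) j a : 'I_N := Ordinal (encF eN j a).

Lemma dv_en N F1 F2 (eN : N = F1*F2) j a : dv eN (en eN j a) = j.
Proof. apply: val_inj => /=; case: a => a Ha /=.
have hF : 0 < F2 by case: (F2) Ha.
by rewrite divnMDl ?divn_small ?addn0. Qed.
Lemma md_en N F1 F2 (eN : N = F1*F2) j a : md eN (en eN j a) = a.
Proof. apply: val_inj => /=; case: a => a Ha /=.
by rewrite modnMDl modn_small. Qed.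
Lemma en_dv N F1 F2 (eN : N = F1*F2) i : en eN (dv eN i) (md eN i) = i.
Proof. by apply: val_inj => /=; rewrite -divn_eq. Qed.
Lemma dv_md_inj N F1 F2 (eN : N = F1*F2) i i' :
  dv eN i = dv eN i' -> md eN i = md eN i' -> i = i'.
Proof. by move=> E1 E2; rewrite -(en_dv eN i) -(en_dv eN i') E1 E2. Qed.

Lemma enc_inj S2 x y a b : 1 <= x -> 1 <= y -> 1 <= a <= S2 -> 1 <= b <= S2 ->
  (x - 1) * S2 + a = (y - 1) * S2 + b -> x = y /\ a = b.
Proof.
move=> hx hy ha hb E.
have E' : (x - 1) * S2 + (a - 1) = (y - 1) * S2 + (b - 1) by lia.
have hS : 0 < S2 by lia.
have D : (x - 1) = (y - 1).
  by move: (f_equal (divn^~ S2) E'); rewrite !divnMDl // !divn_small ?addn0 //; lia.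
have : a - 1 = b - 1 by move: (f_equal (modn^~ S2) E'); rewrite !modnMDl !modn_small //; lia.
lia.
Qed.

Definition prodA F1 K1 F2 K2 S2 N M (eN : N = F1*F2) (eM : M = K1*K2)
  (P1 : pda_array F1 K1) (P2 : pda_array F2 K2) : pda_array N M :=
  fun i c => match P1 (dv eN i) (dv eM c), P2 (md eN i) (md eM c) with
             | Some s1, Some s2 => Some ((s1 - 1) * S2 + s2)
             | _, _ => None end.

Lemma nonstar_card F K Z (p : pda_array F K) k :
  #|[set j | p j k == None]| = Z -> #|[set j | p j k != None]| = F - Z.
Proof.
move=> H; have := cardsC [set j | p j k == None]; rewrite card_ord H.
have -> : ~: [set j | p j k == None] = [set j | p j k != None].
  by apply/setP => j; rewrite !inE.
lia.
Qed.

Lemma prod_PDA K1 F1 Z1 S1 K2 F2 Z2 S2 N M (eN : N = F1*F2) (eM : M = K1*K2)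
  (P1 : pda_array F1 K1) (P2 : pda_array F2 K2) :
  is_PDA K1 F1 Z1 S1 P1 -> is_PDA K2 F2 Z2 S2 P2 ->
  is_PDA M N (N - (F1 - Z1) * (F2 - Z2)) (S1 * S2) (prodA S2 eN eM P1 P2).
Proof.
move=> [A1 [B1 [C1 [D1 [E1 G1]]]]] [A2 [B2 [C2 [D2 [E2 G2]]]]].
rewrite /prodA; split; [|split; [|split; [|split; [|split]]]].
- move=> j k s.
  case e1: (P1 _ _) => [s1|] //; case e2: (P2 _ _) => [s2|] // [<-].
  move: (A1 _ _ _ e1) (A2 _ _ _ e2) => h1 h2.
  have : (s1 - 1) * S2 <= (S1 - 1) * S2 by apply: leq_mul => //; lia.
  nia.
- move=> s Hs.
  have hS : 0 < S2 by move: Hs; case: (S2) => //; rewrite muln0; lia.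
  have h1 : 1 <= (s - 1) %/ S2 + 1 <= S1.
    apply/andP; split; first by rewrite addn1.
    have : (s - 1) %/ S2 < S1 by rewrite ltn_divLR //; lia.
    by rewrite addn1.
  have h2 : 1 <= (s - 1) %% S2 + 1 <= S2.
    apply/andP; split; first by rewrite addn1.
    by rewrite addn1 ltn_pmod.
  have [j1 [k1 e1]] := B1 _ h1; have [j2 [k2 e2]] := B2 _ h2.
  exists (en eN j1 j2), (en eM k1 k2); rewrite !dv_en !md_en e1 e2.
  congr Some; rewrite !addnK addnA -divn_eq; lia.
- move=> c.
  set Q := fun j1 j2 => (P1 j1 (dv eM c) != None) && (P2 j2 (md eM c) != None).
  have HC : [set i | prodA S2 eN eM P1 P2 i c != None] =
            (fun x => en eN x.1 x.2) @: [set x | Q x.1 x.2].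
    apply/setP => i; rewrite inE; apply/idP/imsetP.
    + move=> H; exists (dv eN i, md eN i); last by rewrite en_dv.
      rewrite inE /Q /=; move: H; rewrite /prodA.
      by case: (P1 _ _) => // ?; case: (P2 _ _).
    + move=> [[j1 j2] /=]; rewrite inE /Q /= => /andP [h1 h2] ->.
      rewrite /prodA dv_en md_en.
      by case: (P1 _ _) h1 => // ?; case: (P2 _ _) h2.
  have HQ : [set x | Q x.1 x.2] = setX [set j | P1 j (dv eM c) != None] [set j | P2 j (md eM c) != None].
    by apply/setP => -[x y]; rewrite !inE.
  have Hn : #|[set i | prodA S2 eN eM P1 P2 i c != None]| = (F1 - Z1) * (F2 - Z2).
    rewrite HC card_imset; last first.
      move=> [a b] [a' b'] /= E.
      by have := congr1 (dv eN) E; have := congr1 (md eN) E; rewrite !dv_en !md_en => -> ->.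
    by rewrite HQ cardsX (nonstar_card (C1 _)) (nonstar_card (C2 _)).
  have := cardsC [set i | prodA S2 eN eM P1 P2 i c == None]; rewrite card_ord.
  have -> : ~: [set i | prodA S2 eN eM P1 P2 i c == None] = [set i | prodA S2 eN eM P1 P2 i c != None].
    by apply/setP => j; rewrite !inE.
  rewrite Hn => H.
  have H' : forall a, a + (F1 - Z1) * (F2 - Z2) = N -> a = N - (F1 - Z1) * (F2 - Z2) by move=> a; lia.
  exact: H' H.
- move=> j k1 k2 s.
  case e1: (P1 _ _) => [s1|] //; case e2: (P2 _ _) => [s2|] // [<-].
  case e3: (P1 _ _) => [s3|] //; case e4: (P2 _ _) => [s4|] // [].
  move: (A1 _ _ _ e1) (A2 _ _ _ e2) (A1 _ _ _ e3) (A2 _ _ _ e4) => h1 h2 h3 h4.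
  move=> E; have [E3 E4] : s1 = s3 /\ s2 = s4.
    apply: (enc_inj (S2:=S2)); try lia; first [exact E | exact (esym E)].
  rewrite -E3 in e3; rewrite -E4 in e4.
  apply: (dv_md_inj (eN:=eM)); [exact: D1 e1 e3 | exact: D2 e2 e4].
- move=> j1 j2 k s.
  case e1: (P1 _ _) => [s1|] //; case e2: (P2 _ _) => [s2|] // [<-].
  case e3: (P1 _ _) => [s3|] //; case e4: (P2 _ _) => [s4|] // [].
  move: (A1 _ _ _ e1) (A2 _ _ _ e2) (A1 _ _ _ e3) (A2 _ _ _ e4) => h1 h2 h3 h4.
  move=> E; have [E3 E4] : s1 = s3 /\ s2 = s4.
    apply: (enc_inj (S2:=S2)); try lia; first [exact E | exact (esym E)].
  rewrite -E3 in e3; rewrite -E4 in e4.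
  apply: (dv_md_inj (eN:=eN)); [exact: E1 e1 e3 | exact: E2 e2 e4].
- move=> j1 j2 k1 k2 s.
  case e1: (P1 _ _) => [s1|] //; case e2: (P2 _ _) => [s2|] // [<-].
  case e3: (P1 _ _) => [s3|] //; case e4: (P2 _ _) => [s4|] // [].
  move: (A1 _ _ _ e1) (A2 _ _ _ e2) (A1 _ _ _ e3) (A2 _ _ _ e4) => h1 h2 h3 h4.
  move=> E; have [E3 E4] : s1 = s3 /\ s2 = s4.
    apply: (enc_inj (S2:=S2)); try lia; first [exact E | exact (esym E)].
  rewrite -E3 in e3; rewrite -E4 in e4.
  move=> nj nk.
  case: (dv eN j1 =P dv eN j2) => dj.
  + have dk := D1 _ _ _ _ e1 (etrans (congr1 (fun x => P1 x _) dj) e3).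
    have mj : md eN j1 != md eN j2.
      by apply/eqP => mj; move/eqP: nj; apply; apply: (dv_md_inj (eN:=eN)).
    have mk : md eM k1 != md eM k2.
      by apply/eqP => mk; move/eqP: nk; apply; apply: (dv_md_inj (eN:=eM)).
    have [-> ->] := G2 _ _ _ _ _ e2 e4 mj mk.
    by case: (P1 _ _); case: (P1 _ _).
  + case: (dv eM k1 =P dv eM k2) => dk.
      by case: dj; apply: (E1 _ _ _ _ e1); rewrite dk.
    have [-> ->] := G1 _ _ _ _ _ e1 e3 (introN eqP dj) (introN eqP dk).
    by [].
Qed.
Definition tbl : seq (seq nat) :=
 [:: [:: 1; 4; 7; 0; 0; 0]; [:: 2; 5; 8; 0; 0; 0]; [:: 3; 6; 0; 7; 8; 0];
     [:: 0; 0; 3; 1; 4; 5]; [:: 0; 0; 0; 2; 0; 6]; [:: 0; 0; 0; 0; 2; 7]].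
Definition b6 (j k : nat) : option nat :=
  let v := nth 0 (nth [::] tbl j) k in if v is 0 then None else Some v.
Definition B6 : pda_array 6 6 := fun j k => b6 j k.
Definition I6 := iota 0 6.

Lemma B6_pda : is_PDA 6 6 3 8 B6.
Proof.
have H1 : all (fun j => all (fun k => if b6 j k is Some s then (1 <= s <= 8) else true) I6) I6 by vm_compute.
have H2 : all (fun s => has (fun j => has (fun k => b6 j k == Some s) I6) I6) (iota 1 8) by vm_compute.
have H4 : all (fun j => all (fun k1 => all (fun k2 => (b6 j k1 != None) && (b6 j k1 == b6 j k2) ==> (k1 == k2)) I6) I6) I6 by vm_compute.
have H5 : all (fun j1 => all (fun j2 => all (fun k => (b6 j1 k != None) && (b6 j1 k == b6 j2 k) ==> (j1 == j2)) I6) I6) I6 by vm_compute.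
have H6 : all (fun j1 => all (fun j2 => all (fun k1 => all (fun k2 => (b6 j1 k1 != None) && (b6 j1 k1 == b6 j2 k2) && (j1 != j2) && (k1 != k2) ==> (b6 j1 k2 == None) && (b6 j2 k1 == None)) I6) I6) I6) I6 by vm_compute.
have mI (x : 'I_6) : val x \in I6 by rewrite mem_iota; case: x => /= x; lia.
rewrite /B6; split; [|split; [|split; [|split; [|split]]]].
- move=> j k s E; move/allP: H1 => /(_ _ (mI j)) /allP /(_ _ (mI k)); by rewrite E.
- move=> s Hs; have : s \in iota 1 8 by rewrite mem_iota; lia.
  move/(allP H2)=> /hasP [j jI /hasP [k kI /eqP E]].
  move: jI kI; rewrite !mem_iota !add0n => /andP [_ jI] /andP [_ kI].
  exists (Ordinal jI), (Ordinal kI); exact E.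
- move=> k; rewrite -sum1_card big_mkcond /=.
  case: k => [[|[|[|[|[|[|k]]]]]] Hk] //; by rewrite !big_ord_recr big_ord0 /= !inE.
- move=> j k1 k2 s E1 E2; move/allP: H4 => /(_ _ (mI j)) /allP /(_ _ (mI k1)) /allP /(_ _ (mI k2)).
  by rewrite E1 E2 eqxx /= => /eqP /val_inj.
- move=> j1 j2 k s E1 E2; move/allP: H5 => /(_ _ (mI j1)) /allP /(_ _ (mI j2)) /allP /(_ _ (mI k)).
  by rewrite E1 E2 eqxx /= => /eqP /val_inj.
- move=> j1 j2 k1 k2 s E1 E2 nj nk; move/allP: H6 => /(_ _ (mI j1)) /allP /(_ _ (mI j2)) /allP /(_ _ (mI k1)) /allP /(_ _ (mI k2)).
  by rewrite E1 E2 eqxx nj nk /= => /andP [/eqP -> /eqP ->].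
Qed.
Definition Idn n : pda_array n n := fun j k => if j == k then Some 1 else None.
Arguments Idn : clear implicits.
Lemma Idn_pda n : 0 < n -> is_PDA n n (n - 1) 1 (Idn n).
Proof.
move=> hn; rewrite /Idn; split; [|split; [|split; [|split; [|split]]]].
- by move=> j k s; case: (j == k) => // -[<-].
- move=> s Hs; have -> : s = 1 by lia.
  case: n hn => [|n] // _.
  by exists ord0, ord0; rewrite eqxx.
- move=> k; have -> : [set j | (if j == k then Some 1 else None) == None] = ~: [set k].
    by apply/setP => j; rewrite !inE; case: (j == k).
  by rewrite cardsC1 card_ord subn1.
- by move=> j k1 k2 s; case: eqP => // <- _; case: eqP.
- by move=> j1 j2 k s; case: eqP => // -> _; case: eqP.
- move=> j1 j2 k1 k2 s; case: eqP => // -> _; case: eqP => // -> _ nj _.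
  by rewrite (negbTE nj) eq_sym (negbTE nj).
Qed.

Theorem theorem5p2 (K' F' Z' S' : nat) (P' : pda_array F' K') (m : nat) :
  is_PDA K' F' Z' S' P' -> 0 < m -> 6 %| m ->
  exists P : pda_array (m * F') (m * K'),
    is_PDA (m * K') (m * F') (m * F' - 3 * (F' - Z')) (8 * S') P.
Proof.
move=> HP hm /dvdnP [n En]; subst m.
have hn : 0 < n by move: hm; rewrite muln_gt0 => /andP [].
have HB := prod_PDA (erefl (n * 6)) (erefl (n * 6)) (Idn_pda hn) B6_pda.
have eN : n * 6 * F' = F' * (n * 6) by rewrite mulnC.
have eM : n * 6 * K' = K' * (n * 6) by rewrite mulnC.
have HQ := prod_PDA eN eM HP HB.
have e1 : S' * (1 * 8) = 8 * S' by lia.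
have e2 : n * 6 * F' - (F' - Z') * (n * 6 - (n * 6 - (n - (n - 1)) * (6 - 3)))
          = n * 6 * F' - 3 * (F' - Z').
  have -> : n * 6 - (n - (n - 1)) * (6 - 3) = n * 6 - 3 by lia.
  have -> : n * 6 - (n * 6 - 3) = 3 by lia.
  by rewrite [(F' - Z') * 3]mulnC.
rewrite -e1 -e2; eexists; exact: HQ.
Qed.
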